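(* In the setting of the context, let $\tilde f\in\mathcal L^1_{uni}$. Then the map $(s,\eta)\mapsto\mathbb E^{s,\eta}[\int_s^T\tilde f_rdV_r]$ from $[0,T]\times\Omega$ to $\mathbb R$ is $\mathbb F^o$-progressively measurable.
   Context: Let $E$ be Polish, $\Omega=\mathbb D(\mathbb R_+,E)$, $X_t(\omega)=\omega(t)$, $\mathcal F=\sigma(X_r,r\ge0)$, $\mathcal F^o_t=\sigma(X_r,r\le t)$, $\mathcal F_t=\bigcap_{u>t}\mathcal F^o_u$, $\mathbb F^o=(\mathcal F^o_t)$, $\omega^t=\omega(\cdot\wedge t)$. $(\mathbb P^{s,\eta})_{(s,\eta)\in\mathbb R_+\times\Omega}$ is a family of probabilities on $(\Omega,\mathcal F)$ such that $\mathbb P^{s,\eta}(\omega^s=\eta^s)=1$, $\eta\mapsto\mathbb P^{s,\eta}(F)$ is $\mathcal F^o_s$-measurable, $(t,\omega)\mapsto\mathbb P^{t,\omega}(F)$ is $\mathbb F^o$-progressively measurable, and $\mathbb P^{s,\eta}(F|\mathcal F_t)(\omega)=\mathbb P^{s,\eta}(F|\mathcal F^o_t)(\omega)=\mathbb P^{t,\omega}(F)$ for $\mathbb P^{s,\eta}$-a.a. $\omega$, all $t\ge s$, $F\in\mathcal F$. Fix $T>0$ and $V:[0,T]\to\mathbb R_+$ continuous non-decreasing. $\mathcal L^1_{uni}$ is the set of $\mathbb F^o$-progressively measurable processes $Y$ with $\mathbb E^{s,\eta}[\int_s^T|Y_r|dV_r]<\infty$ for all $(s,\eta)\in[0,T]\times\Omega$.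 *)

(* Defs.v *)
From HB Require Import structures.
From mathcomp Require Import all_boot all_order all_algebra.
From mathcomp Require Import all_classical all_reals all_analysis.
Set Implicit Arguments. Unset Strict Implicit. Unset Printing Implicit Defensive.
Import Order.TTheory GRing.Theory Num.Theory numFieldTopology.Exports.
Local Open Scope classical_set_scope.
Local Open Scope ring_scope.

(* E is given with a complete (pseudo)metric; Polish = additionally Hausdorff
   (so the pseudometric is a metric) and separable. *)
Definition polish (R : realType) (E : completePseudoMetricType R) : Prop :=
  hausdorff_space E /\ exists D : set E, countable D /\ closure D = setT.

Definition borel_sets (E : topologicalType) : set (set E) := <<s open >>.

(* A path on R_+ is encoded as a function R -> E which is constant on
   (-oo, 0] (i.e. extended by w(t) = w(0) for t < 0). This is a bijective
   encoding of D(R_+,E). *)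
Definition cadlag (R : realType) (E : topologicalType) (w : R -> E) : Prop :=
  [/\ (forall t, t <= 0 -> w t = w 0),
      (forall t, 0 <= t -> w x @[x --> t^'+] --> w t) &
      (forall t, 0 < t -> exists l : E, w x @[x --> t^'-] --> l)].

Definition skorokhod (R : realType) (E : topologicalType) :=
  {w : R -> E | `[< cadlag w >]}.

Definition X (R : realType) (E : topologicalType) (t : R) (w : skorokhod R E) : E :=
  sval w t.

HB.instance Definition _ (R : realType) (E : topologicalType) :=
  Choice.on (skorokhod R E).

Section pointed_skorokhod.
Variables (R : realType) (E : ptopologicalType).
Lemma cst_cadlag : cadlag (fun _ : R => (point : E)).
Proof.
split=> //.
- by move=> t _; exact: cvg_cst.
- by move=> t _; exists point; exact: cvg_cst.
Qed.
HB.instance Definition _ := isPointed.Build (skorokhod R E)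
  (exist _ (fun _ : R => (point : E)) (asboolT cst_cadlag)).
End pointed_skorokhod.

Definition coord_gen (R : realType) (E : topologicalType) (I : set R)
  : set (set (skorokhod R E)) :=
  [set A | exists r, I r /\ exists B, borel_sets B /\ A = X r @^-1` B].

Definition Omega (R : realType) (E : ptopologicalType) :=
  g_sigma_algebraType (@coord_gen R E [set r | 0 <= r]).

Definition Fo (R : realType) (E : ptopologicalType) (t : R) : set (set (Omega R E)) :=
  <<s @coord_gen R E [set r | 0 <= r <= t] >>.

Definition Fr (R : realType) (E : ptopologicalType) (t : R) : set (set (Omega R E)) :=
  [set A | forall u, t < u -> Fo u A].

Definition measurable_wrt (R : realType) (T : Type) (G : set (set T)) (f : T -> R) :=
  forall B : set R, measurable B -> G (f @^-1` B).

Definition prog_measurable (R : realType) (T : Type) (G : R -> set (set T))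
    (I : set R) (Y : R -> T -> R) :=
  forall t, I t ->
  let D := [set r | 0 <= r <= t] `*` [set: T] in
  let rects := [set Z : set (R * T) | exists A C, [/\ measurable A,
                    A `<=` [set r | 0 <= r <= t], G t C & Z = A `*` C]] in
  forall B : set R, measurable B ->
    <<s D, rects >> (D `&` ((fun p => Y p.1 p.2) @^-1` B)).

Definition cond_prob_version (R : realType) d (T : measurableType d)
    (P : probability T R) (G : set (set T)) (F : set T) (g : T -> R) :=
  measurable_wrt G g /\
  forall A, G A -> P (F `&` A) = (\int[P]_(w in A) (g w)%:E)%E.

Definition dV_integral (R : realType) (V : cumulative R R) (s T : R) (y : R -> R)
  : \bar R :=
  (\int[lebesgue_stieltjes_measure V]_(r in [set r : measurableTypeR R | (s <= r <= T)%R])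
     (y r)%:E)%E.

Definition markov_family (R : realType) (E : ptopologicalType)
    (P : R -> Omega R E -> probability (Omega R E) R) : Prop :=
  [/\
      (forall s eta, 0 <= s ->
         P s eta [set w : Omega R E | forall r, X (Order.min r s) w = X (Order.min r s) eta]
         = 1%E),
      (forall s (F : set (Omega R E)), 0 <= s -> measurable F ->
         measurable_wrt (Fo s) (fun eta => fine (P s eta F))),
      (forall F : set (Omega R E), measurable F ->
         prog_measurable (@Fo R E) [set t | 0 <= t] (fun t w => fine (P t w F))) &
      (forall s eta t (F : set (Omega R E)), 0 <= s <= t -> measurable F ->
         cond_prob_version (P s eta) (Fr t) F (fun w => fine (P t w F)) /\
         cond_prob_version (P s eta) (Fo t) F (fun w => fine (P t w F)))].

Definition L1uni (R : realType) (E : ptopologicalType)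
    (P : R -> Omega R E -> probability (Omega R E) R)
    (T : R) (V : cumulative R R) (Y : R -> Omega R E -> R) : Prop :=
  prog_measurable (@Fo R E) [set t | 0 <= t <= T] Y /\
  forall s eta, 0 <= s <= T ->
    (\int[P s eta]_w dV_integral V s T (fun r => `|Y r w|%R) < +oo)%E.

(* Main.v *)
Require Import Defs.
From HB Require Import structures.
From mathcomp Require Import all_boot all_order all_algebra.
From mathcomp Require Import all_classical all_reals all_analysis.
From mathcomp Require Import measurable_realfun.
Import Order.TTheory GRing.Theory Num.Theory numFieldTopology.Exports.
Local Open Scope classical_set_scope.
Local Open Scope ring_scope.

Section prog.
Context (R : realType) (E : ptopologicalType).
Local Notation Om := (Omega R E).

Definition Dt (t : R) : set (R * Om) := [set r | 0 <= r <= t] `*` [set: Om].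
Definition rectsT (t : R) : set (set (R * Om)) :=
  [set Z | exists A C, [/\ measurable A,
                    A `<=` [set r | 0 <= r <= t], Fo t C & Z = A `*` C]].
Definition St (t : R) : set (set (R * Om)) :=
  [set A | <<s Dt t, rectsT t >> (Dt t `&` A)].
Definition Xt (t : R) := g_sigma_algebraType (St t).

Lemma St_sigma t : sigma_algebra setT (St t).
Proof.
split.
- rewrite /St /=; rewrite setI0; exact: sigma_algebra0.
- move=> A; rewrite /St /= => h.
  have -> : Dt t `&` (setT `\` A) = Dt t `\` (Dt t `&` A).
    apply/seteqP; split => x /=.
    - by move=> [Dx [_ nA]]; split => // -[_ Ax]; exact: nA Ax.
    - by move=> [Dx nDA]; split => //; split => // Ax; exact: nDA.
  exact: sigma_algebraCD.
- move=> F hF; rewrite /St /= setI_bigcupr; exact: sigma_algebra_bigcup.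
Qed.

Lemma measurable_XtE t : @measurable _ (Xt t) = St t.
Proof. exact: sigma_algebra_id (St_sigma t). Qed.

Lemma prog_iff t (Y : R -> Om -> R) :
  (forall B : set R, measurable B ->
     <<s Dt t, rectsT t >> (Dt t `&` ((fun p => Y p.1 p.2) @^-1` B))) <->
  measurable_fun [set: Xt t] (fun p : Xt t => Y p.1 p.2).
Proof.
split.
- move=> h _ B mB; rewrite measurable_XtE /St setTI; exact: h.
- move=> h B mB; have := h measurableT B mB.
  by rewrite measurable_XtE /St setTI.
Qed.

Lemma Fo_setT t : Fo t (setT : set Om).
Proof.
rewrite /Fo.
have h0 : <<s @coord_gen R E [set r | 0 <= r <= t] >> set0 by exact: sigma_algebra0.
by have := sigma_algebraCD h0; rewrite setD0.
Qed.

Lemma measurable_fst_Xt t : measurable_fun [set: Xt t] (fun p : Xt t => p.1 : R).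
Proof.
move=> _ B mB; rewrite measurable_XtE /St setTI.
apply: sub_sigma_algebra.
exists ([set r | 0 <= r <= t] `&` B), setT; split.
- apply: measurableI => //. 
  have -> : [set r : R | 0 <= r <= t] = `[0, t]%classic.
    by apply/seteqP; split => r /=; rewrite in_itv.
  exact: measurable_itv.
- by move=> r [].
- exact: Fo_setT.
- apply/seteqP; split => [[r w]|[r w]] /=.
  + by move=> [[rt _] Br].
  + by move=> [[rt Br] _].
Qed.

Section kern.
Variable P : R -> Om -> probability Om R.
Variable t : R.
Hypothesis hP3 : forall F : set Om, measurable F ->
  prog_measurable (@Fo R E) [set t | 0 <= t] (fun t w => fine (P t w F)).
Hypothesis t0 : 0 <= t.

Definition kP : Xt t -> {measure set Om -> \bar R} := fun x => P x.1 x.2.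

Lemma kP_meas U : measurable U -> measurable_fun setT (kP ^~ U).
Proof.
move=> mU.
have -> : kP ^~ U = (fun x : Xt t => (fine (P x.1 x.2 U))%:E).
  apply/funext => x; rewrite /kP /= fineK //.
  by rewrite ge0_fin_numE ?measure_ge0 // (le_lt_trans (probability_le1 _ mU)) ?ltry.
apply/measurable_EFinP.
apply/(prog_iff t (fun s w => fine (P s w U))).
move=> B mB; exact: (hP3 U mU t t0 B mB).
Qed.

Lemma mPt : measurable_fun [set: Xt t]
  (fun x : Xt t => (P x.1 x.2 : pprobability Om R)).
Proof.
apply: (measurability (@pset _ _ _ : set (set (pprobability Om R)))) => //.
move=> _ -[_ [r r01] [Ys mYs <-]] <-.
rewrite /mset /preimage /=.
apply: emeasurable_fun_infty_o => //.
exact: kP_meas.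
Qed.

Lemma kP_integral (k : Xt t * Om -> \bar R) :
  (forall z, (0 <= k z)%E) -> measurable_fun setT k ->
  measurable_fun [set: Xt t] (fun x : Xt t => (\int[P x.1 x.2]_y k (x, y))%E).
Proof.
move=> k0 mk.
exact: (measurable_fun_integral_finite_kernel k (kprobability mPt) k0 mk).
Qed.
End kern.

Lemma Dt_measurable t : measurable (Dt t).
Proof.
apply: measurableX => //.
have -> : [set r : R | 0 <= r <= t] = `[0, t]%classic.
  by apply/seteqP; split => r /=; rewrite in_itv.
exact: measurable_itv.
Qed.

Lemma Fo_sub t : Fo t `<=` (@measurable _ Om).
Proof.
apply: sub_sigma_algebra2 => A [r [/andP[r0 _] HB]].
by exists r; split.
Qed.

Lemma gen_sub t : <<s Dt t, rectsT t >> `<=` (@measurable _ (R * Om)%type).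
Proof.
apply: smallest_sub.
  split.
  - exact: measurable0.
  - by move=> A mA; apply: measurableD => //; exact: Dt_measurable.
  - by move=> F mF; exact: bigcupT_measurable.
move=> _ [A [C [mA _ FC ->]]].
by apply: measurableX => //; apply: (@Fo_sub t); exact: FC.
Qed.

Lemma prog_meas_D t (Y : R -> Om -> R) :
  (forall B : set R, measurable B ->
     <<s Dt t, rectsT t >> (Dt t `&` ((fun p => Y p.1 p.2) @^-1` B))) ->
  measurable_fun (Dt t) (fun p : R * Om => Y p.1 p.2).
Proof.
move=> h _ B mB; apply: (@gen_sub t); exact: h.
Qed.


Lemma id_mTR : measurable_fun [set: measurableTypeR R] (fun r : measurableTypeR R => r : R).
Proof. by move=> _ B mB; rewrite setTI. Qed.

Section fub.
Variables (V : cumulative R R) (T : R) (t : R).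

Definition Fg (g : R * Om -> R) (z : (Xt t * Om) * measurableTypeR R) : \bar R :=
  if ((z.1.1.1 : R) <= (z.2 : R)) && ((z.2 : R) <= T)
  then (Num.max (g ((z.2 : R), z.1.2)) 0)%:E else 0%E.

Lemma Fg_ge0 g z : (0 <= Fg g z)%E.
Proof. by rewrite /Fg; case: ifP => // _; rewrite lee_fin le_max lexx orbT. Qed.

Lemma Fg_meas g : measurable_fun setT g -> measurable_fun setT (Fg g).
Proof.
move=> mg.
have m2 : measurable_fun [set: (Xt t * Om) * measurableTypeR R]
    (fun z : (Xt t * Om) * measurableTypeR R => (z.2 : R)).
  exact: (measurableT_comp id_mTR measurable_snd).
have m111 : measurable_fun [set: (Xt t * Om) * measurableTypeR R]
    (fun z : (Xt t * Om) * measurableTypeR R => (z.1.1.1 : R)).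
  apply: (measurableT_comp (measurable_fst_Xt t)).
  exact: (measurableT_comp measurable_fst measurable_fst).
apply: measurable_fun_ifT.
- apply: measurable_and.
  + exact: measurable_fun_ler.
  + by apply: measurable_fun_ler => //; exact: measurable_cst.
- apply/measurable_EFinP.
  apply: measurable_maxr => //.
  apply: (measurableT_comp mg).
  apply: measurable_fun_pair => //.
  exact: (measurableT_comp measurable_snd measurable_fst).
- exact: measurable_cst.
Qed.

Lemma Hg_meas g : measurable_fun setT g ->
  measurable_fun [set: Xt t * Om]
    (fun p : Xt t * Om => \int[lebesgue_stieltjes_measure V]_r Fg g (p, r))%E.
Proof.
move=> mg.
exact: (measurable_fun_fubini_tonelli_F (m2 := lebesgue_stieltjes_measure V) (Fg g) (Fg_meas g mg) (@Fg_ge0 g)).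
Qed.

End fub.
End prog.

Lemma absmax (R : realType) (a : R) : `|a| = Num.max a 0 + Num.max (- a) 0.
Proof.
rewrite /Order.max; case: ifPn => h1; case: ifPn => h2.
- by move: h2; rewrite oppr_lt0 => /(lt_trans h1); rewrite ltxx.
- by rewrite ltr0_norm // add0r.
- by rewrite ger0_norm ?addr0 // leNgt.
- move: h1 h2; rewrite -!leNgt oppr_ge0 => h1 h2.
  have -> : a = 0 by apply/eqP; rewrite eq_le h2 h1.
  by rewrite normr0 oppr0 addr0.
Qed.

Theorem lemmaA1 (R : realType) (E : completePseudoMetricType R)
  (hE : polish E)
  (P : R -> Omega R E -> probability (Omega R E) R)
  (hP : markov_family P)
  (T : R) (hT : 0 < T)
  (V : cumulative R R) (hVc : continuous V)
  (hV0 : forall r, 0 <= r <= T -> 0 <= V r)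
  (f : R -> Omega R E -> R) (hf : L1uni P T V f) :
  prog_measurable (@Fo R E) [set t | 0 <= t <= T]
    (fun s eta => fine (\int[P s eta]_w dV_integral V s T (fun r => f r w))%E).
Proof.
case: hP => _ _ hP3 _.
case: hf => hfprog hfint.
have hTT : [set t | 0 <= t <= T] T by rewrite /= lexx ltW.
have mfD : measurable_fun (Dt R E T) (fun p : R * Omega R E => f p.1 p.2).
  by apply: prog_meas_D => B mB; exact: (hfprog T hTT B mB).
pose fT := (fun p : R * Omega R E => f p.1 p.2) \_ (Dt R E T).
have mfT : measurable_fun setT fT.
  exact: ((measurable_restrictT _ (Dt_measurable R E T)).1 mfD).
have mfTN : measurable_fun setT (fun p => - fT p).
  exact: measurable_funN.
move=> t /andP[t0 tT] D rects B mB.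
change (<<s Dt R E t, rectsT R E t >> (Dt R E t `&` ((fun p => fine (\int[P p.1 p.2]_w dV_integral V p.1 T (fun r => f r w))%E) @^-1` B))).
pose kp := fun z : Xt R E t * Omega R E => (\int[lebesgue_stieltjes_measure V]_r Fg R E T t fT (z, r))%E.
pose km := fun z : Xt R E t * Omega R E => (\int[lebesgue_stieltjes_measure V]_r Fg R E T t (fun p => (- fT p)%R) (z, r))%E.
pose Y' := fun x : R * Omega R E => fine (\int[P x.1 x.2]_y kp (x, y))%E - fine (\int[P x.1 x.2]_y km (x, y))%E.
have mY : measurable_fun [set: Xt R E t] (fun x : Xt R E t => Y' (x.1, x.2)).
  have -> : (fun x : Xt R E t => Y' (x.1, x.2)) = Y' by apply/funext => -[].
  apply: measurable_funB.
  - apply: (measurableT_comp (fine_measurable measurableT)).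
    apply: (@kP_integral R E P t hP3 t0) => //.
    + by move=> z; apply: integral_ge0 => r _; exact: Fg_ge0.
    + exact: Hg_meas.
  - apply: (measurableT_comp (fine_measurable measurableT)).
    apply: (@kP_integral R E P t hP3 t0) => //.
    + by move=> z; apply: integral_ge0 => r _; exact: Fg_ge0.
    + exact: Hg_meas.
have eqY : forall s w, Dt R E t (s, w) ->
  fine (\int[P s w]_y dV_integral V s T (fun r => f r y))%E = Y' (s, w).
  move=> s w [/andP[s0 st] _].
  have sT : s <= T := le_trans st tT.
  pose hp := fun y => kp ((s, w) : Xt R E t, y).
  pose hm := fun y => km ((s, w) : Xt R E t, y).
  have mhp : measurable_fun setT hp.
    exact: (measurable_fun_pair2 ((s, w) : Xt R E t) (Hg_meas R E V T t fT mfT)).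
  have mhm : measurable_fun setT hm.
    exact: (measurable_fun_pair2 ((s, w) : Xt R E t) (Hg_meas R E V T t _ mfTN)).
  have hp0 : forall y, (0 <= hp y)%E.
    by move=> y; apply: integral_ge0 => r _; exact: Fg_ge0.
  have hm0 : forall y, (0 <= hm y)%E.
    by move=> y; apply: integral_ge0 => r _; exact: Fg_ge0.
  have fTE : forall r y, s <= r <= T -> fT (r, y) = f r y.
    move=> r y /andP[sr rT]; rewrite /fT /patch mem_set //=; split => //.
    by apply/andP; split => //; exact: (le_trans s0 sr).
  have claimA : forall y, dV_integral V s T (fun r => f r y) = (hp y - hm y)%E.
    move=> y; rewrite /dV_integral integralE.
    congr (_ - _)%E; rewrite integral_mkcond; apply: eq_integral => r _; rewrite /patch /Fg /=.
    - case: ifPn => [/set_mem /= hr|nr].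
      + by rewrite hr funeposE fTE // EFin_max.
      + rewrite ifF //; apply/negbTE; apply: contra nr => h; exact: mem_set.
    - case: ifPn => [/set_mem /= hr|nr].
      + by rewrite hr funenegE fTE // -EFinN EFin_max.
      + rewrite ifF //; apply/negbTE; apply: contra nr => h; exact: mem_set.
  have mFy : forall (g : R * Omega R E -> R) y, measurable_fun setT g ->
      measurable_fun setT (fun r : measurableTypeR R => Fg R E T t g (((s, w) : Xt R E t, y), r)).
    move=> g y mg.
    exact: (measurable_fun_pair2 (((s, w) : Xt R E t, y)) (Fg_meas R E T t g mg)).
  have claimB : forall y, dV_integral V s T (fun r => `|f r y|) = (hp y + hm y)%E.
    move=> y; rewrite /dV_integral integral_mkcond /hp /kp /km.
    rewrite -ge0_integralD //; first last.
    - exact: mFy.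
    - by move=> r _; exact: Fg_ge0.
    - exact: mFy.
    - by move=> r _; exact: Fg_ge0.
    apply: eq_integral => r _; rewrite /patch /Fg /=.
    case: ifPn => [/set_mem /= hr|nr].
    + by rewrite hr !fTE // -EFinD -absmax.
    + have hc : (s <= r) && (r <= T) = false.
        by apply/negbTE; apply: contra nr => h; exact: mem_set.
      by rewrite hc adde0.
  have hint : (\int[P s w]_y (hp y + hm y) < +oo)%E.
    rewrite (_ : (\int[P s w]_y (hp y + hm y))%E = (\int[P s w]_y dV_integral V s T (fun r => `|f r y|%R))%E).
      by apply: hfint; rewrite s0 sT.
    by apply: eq_integral => y _; rewrite claimB.
  have ip : (P s w).-integrable setT hp.
    apply/integrableP; split => //.
    apply: (le_lt_trans _ hint).
    have mabs : measurable_fun setT (fun y => `|hp y|%E) by apply: measurableT_comp.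
    apply: (ge0_le_integral (P s w) measurableT (fun y _ => abse_ge0 (hp y)) mabs (emeasurable_funD mhp mhm)).
    by move=> y _; rewrite gee0_abs // leeDl.
  have im : (P s w).-integrable setT hm.
    apply/integrableP; split => //.
    apply: (le_lt_trans _ hint).
    have mabs : measurable_fun setT (fun y => `|hm y|%E) by apply: measurableT_comp.
    apply: (ge0_le_integral (P s w) measurableT (fun y _ => abse_ge0 (hm y)) mabs (emeasurable_funD mhp mhm)).
    by move=> y _; rewrite gee0_abs // leeDr.
  rewrite (_ : (\int[P s w]_y dV_integral V s T (fun r => f r y))%E = (\int[P s w]_y (hp y - hm y))%E); last first.
    by apply: eq_integral => y _; rewrite claimA.
  rewrite (integralB measurableT ip im) fineB //; exact: integrable_fin_num.
have -> : Dt R E t `&` ((fun p => fine (\int[P p.1 p.2]_w dV_integral V p.1 T (fun r => f r w))%E) @^-1` B)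
   = Dt R E t `&` ((fun p => Y' (p.1, p.2)) @^-1` B).
  apply/seteqP; split => -[s w] /= [hD hB]; split => //.
  - by rewrite -eqY.
  - by rewrite eqY.
exact: ((@prog_iff R E t (fun s w => Y' (s, w))).2 mY B mB).
Qed.
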